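(* Let $X$ be a bounded degree simplicial complex, and let $X^{\leq 1}$ denote its $1$-skeleton (a bounded degree graph). Then ${}_s\mathrm{TO}^1_X(r)\simeq \mathrm{cw}_{X^{\leq 1}}(r)$.
   Context: A simplicial complex is the topological realisation of an abstract simplicial complex $(S,\mathcal S)$ ($\mathcal S$ a family of finite subsets of $S$ containing singletons, closed under subsets); it is bounded degree if $S$ is countable and $\max_s|\{t\ne s:\{s,t\}\in\mathcal S\}|<\infty$. $|Z|$ is the number of $0$-simplices; closed simplices are sets of points whose support lies in a fixed element of $\mathcal S$; $Z\le X$ means an injection of $0$-simplices sending simplices to simplices (for graphs: $Z$ is isomorphic to a subgraph). For finite $Z$ and continuous $f:Z\to\mathbb R^q$, ${}_s\mathrm{Ov}(f)=\max_{z}|\{\sigma\text{ closed simplex of }Z: z\in f(\sigma)\}|$, ${}_s\mathrm{TO}^q(Z)=\min_f {}_s\mathrm{Ov}(f)$, ${}_s\mathrm{TO}^q_X(r)=\max\{{}_s\mathrm{TO}^q(Z): Z\le X, |Z|\le r\}$. For a finite graph $\Gamma$ with $r$ vertices, the cutwidth $\mathrm{cw}(\Gamma)$ is the minimum over bijections $\sigma:V\Gamma\to\{1,\dots,r\}$ of $\max_i|\{vw\in E\Gamma:\sigma(v)<i\le\sigma(w)\}|$. For a graph $X$, $\mathrm{cw}_X(r)=\max\{\mathrm{cw}(\Gamma):\Gamma\le X, |\Gamma|\le r\}$. $f\lesssim g$ means there is $C$ with $f(r)\le Cg(Cr)+C$ for all $r$; $f\simeq g$ means both directions hold. *)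

(* Defs.v *)
From HB Require Import structures.
From mathcomp Require Import all_boot all_order all_algebra.
From mathcomp Require Import fingroup perm.
From mathcomp Require Import finmap.
From mathcomp Require Import boolp classical_sets topology normedtype.
From mathcomp Require Import Rstruct Rstruct_topology.
From Stdlib Require Import Reals ClassicalEpsilon.

Set Implicit Arguments.
Unset Strict Implicit.
Unset Printing Implicit Defensive.

Import Order.TTheory GRing.Theory Num.Theory.
Local Open Scope fset_scope.

(** Generic maximum / minimum of a set of natural numbers (Prop predicate).
    [nat_max P] is the largest element of P (if it exists, else 0),
    [nat_min P] is the least element of P (if it exists, else 0). *)
Definition nat_max (P : nat -> Prop) : nat :=
  epsilon (inhabits 0%N) (fun n => P n /\ forall m, P m -> (m <= n)%N).
Definition nat_min (P : nat -> Prop) : nat :=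
  epsilon (inhabits 0%N) (fun n => P n /\ forall m, P m -> (n <= m)%N).

Definition asymp_le (f g : nat -> nat) : Prop :=
  exists C : nat, forall r : nat, (f r <= C * g (C * r) + C)%N.
Definition asymp_eq (f g : nat -> nat) : Prop := asymp_le f g /\ asymp_le g f.

Definition is_complex (S : countType) (Xs : {fset S} -> Prop) : Prop :=
  (forall s : S, Xs [fset s]) /\
  (forall A B : {fset S}, Xs A -> B `<=` A -> Xs B).

Definition bounded_degree (S : countType) (Xs : {fset S} -> Prop) : Prop :=
  exists D : nat, forall (s : S) (A : {fset S}),
    (forall t, t \in A -> t != s /\ Xs [fset s; t]) -> (#|` A| <= D)%N.

Definition fin_complex (n : nat) (F : {set {set 'I_n}}) : Prop :=
  (forall i : 'I_n, [set i] \in F) /\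
  (forall A B : {set 'I_n}, A \in F -> B \subset A -> B \in F).

Definition complex_embeds (n : nat) (F : {set {set 'I_n}})
    (S : countType) (Xs : {fset S} -> Prop) : Prop :=
  exists phi : 'I_n -> S, injective phi /\
    forall sigma, sigma \in F -> Xs [fset phi i | i in enum sigma].

Local Open Scope ring_scope.

Definition supp (n : nat) (x : 'rV[R]_n) : {set 'I_n} := [set i | x ord0 i != 0].

Definition realisation (n : nat) (F : {set {set 'I_n}}) : set 'rV[R]_n :=
  fun x => (forall i, 0 <= x ord0 i) /\ \sum_(i < n) x ord0 i = 1 /\ supp x \in F.

Definition closed_simplex (n : nat) (F : {set {set 'I_n}}) (sigma : {set 'I_n})
  : set 'rV[R]_n :=
  fun x => realisation F x /\ supp x \subset sigma.

Definition overlap_at (n : nat) (F : {set {set 'I_n}}) (f : 'rV[R]_n -> R)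
    (z : R) : nat :=
  #|[set sigma in F | (0 < #|sigma|)%nat &&
        `[< exists x, closed_simplex F sigma x /\ f x = z >]]|.

Definition sOv (n : nat) (F : {set {set 'I_n}}) (f : 'rV[R]_n -> R) : nat :=
  nat_max (fun k => exists z : R, k = overlap_at F f z).

Definition sTO1 (n : nat) (F : {set {set 'I_n}}) : nat :=
  nat_min (fun k => exists f : 'rV[R]_n -> R,
    continuous (from_subspace (realisation F) f) /\ k = sOv F f).

Definition sTO1_X (S : countType) (Xs : {fset S} -> Prop) (r : nat) : nat :=
  nat_max (fun k => exists (n : nat) (F : {set {set 'I_n}}),
    (n <= r)%nat /\ fin_complex F /\ complex_embeds F Xs /\ k = sTO1 F).

Definition simple_graph (m : nat) (e : rel 'I_m) : Prop :=
  symmetric e /\ irreflexive e.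

Definition graph_embeds_skel (m : nat) (e : rel 'I_m)
    (S : countType) (Xs : {fset S} -> Prop) : Prop :=
  exists psi : 'I_m -> S, injective psi /\
    forall i j, e i j -> Xs [fset psi i; psi j].

(** number of edges vw with sigma(v) < i <= sigma(w), for the bijection
    sigma = p + 1 : 'I_m -> {1..m} and i = j + 1 *)
Definition cut_size (m : nat) (e : rel 'I_m) (p : {perm 'I_m}) (j : 'I_m) : nat :=
  #|[set vw : 'I_m * 'I_m | e vw.1 vw.2 && ((p vw.1 < j)%nat && (j <= p vw.2)%nat)]|.

Definition cutwidth (m : nat) (e : rel 'I_m) : nat :=
  nat_min (fun k => exists p : {perm 'I_m}, k = \max_(j < m) cut_size e p j).

Definition cw_X (S : countType) (Xs : {fset S} -> Prop) (r : nat) : nat :=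
  nat_max (fun k => exists (m : nat) (e : rel 'I_m),
    (m <= r)%nat /\ simple_graph e /\ graph_embeds_skel e Xs /\ k = cutwidth e).

(* Main.v *)
Require Import Defs.
Require Import Defs.
From HB Require Import structures.
From mathcomp Require Import all_boot all_order all_algebra finmap.
From mathcomp Require Import fingroup perm.
From mathcomp Require Import boolp classical_sets topology normedtype.
From mathcomp Require Import Rstruct Rstruct_topology.
From Stdlib Require Import Rdefinitions ClassicalEpsilon.
From mathcomp Require Import zify.
Set Implicit Arguments.
Unset Strict Implicit.
Unset Printing Implicit Defensive.
Import Order.TTheory GRing.Theory Num.Theory.
Local Open Scope ring_scope.
Lemma nat_max_spec (P : nat -> Prop) :
  (exists n, P n) -> (exists B, forall n, P n -> (n <= B)%nat) ->
  P (nat_max P) /\ forall m, P m -> (m <= nat_max P)%nat.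
Proof.
move=> [n0 Pn0] [B HB].
have ex : exists n, P n /\ forall m, P m -> (m <= n)%nat.
  have ex1 : exists n, `[< P n >] by exists n0; apply/asboolP.
  have ub : forall i, `[< P i >] -> (i <= B)%nat by move=> i /asboolP; apply: HB.
  case: (ex_maxnP ex1 ub) => i /asboolP Pi Hi.
  by exists i; split => // m Pm; apply: Hi; apply/asboolP.
rewrite /nat_max; exact: (epsilon_spec (inhabits 0%N) _ ex).
Qed.

Lemma nat_min_spec (P : nat -> Prop) :
  (exists n, P n) ->
  P (nat_min P) /\ forall m, P m -> (nat_min P <= m)%nat.
Proof.
move=> [n0 Pn0].
have ex : exists n, P n /\ forall m, P m -> (n <= m)%nat.
  have ex1 : exists n, `[< P n >] by exists n0; apply/asboolP.
  case: (ex_minnP ex1) => i /asboolP Pi Hi.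
  by exists i; split => // m Pm; apply: Hi; apply/asboolP.
rewrite /nat_min; exact: (epsilon_spec (inhabits 0%N) _ ex).
Qed.

Section WC.
Local Open Scope classical_set_scope.
Lemma within_comp {T U V : topologicalType} (A : set T) (B : set U)
  (g : T -> U) (f : U -> V) :
  continuous g -> (forall t, A t -> B (g t)) -> {within B, continuous f} ->
  {within A, continuous (f \o g)}.
Proof.
move=> cg gAB cf; apply/subspace_continuousP => x Ax.
have := (subspace_continuousP _ _).1 cf (g x) (gAB x Ax) => cf'.
apply: (@cvg_comp _ _ _ g f _ (within B (nbhs (g x)))); last exact: cf'.
move=> W /=.
rewrite /within /= => HW.
have := cg x _ HW; rewrite /= /nbhs /=.
move=> H; apply: filterS H => t Ht At; exact: Ht (gAB t At).
Qed.

End WC.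


Definition delta m (i : 'I_m) : 'rV[R]_m := \row_k (k == i)%:R.
Definition seg m (v w : 'I_m) (t : R) : 'rV[R]_m := delta v + t *: (delta w - delta v).

Lemma seg_coord m (v w : 'I_m) t k :
  seg v w t ord0 k = (k == v)%:R + t * ((k == w)%:R - (k == v)%:R).
Proof. by rewrite !mxE. Qed.

Lemma sum_delta m (v : 'I_m) : \sum_(k < m) ((k == v)%:R : R) = 1.
Proof.
by rewrite (bigD1 v) //= eqxx big1 ?addr0 // => k /negbTE ->.
Qed.

Lemma seg_cs m (F : {set {set 'I_m}}) v w t : fin_complex F -> v != w ->
  [set v; w] \in F -> 0 <= t <= 1 -> closed_simplex F [set v; w] (seg v w t).
Proof.
move=> [_ Fdown] vw Fvw /andP[t0 t1].
have Hsupp : supp (seg v w t) \subset [set v; w].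
  apply/fintype.subsetP => k; rewrite !inE seg_coord.
  by case: (k == v); case: (k == w); rewrite //= subrr mulr0 addr0 eqxx.
split; last by [].
split; [|split].
- move=> k; rewrite seg_coord.
  case: eqP => [->|_]; case: eqP => [Hw|_] //=.
  + by rewrite subrr mulr0 addr0.
  + by rewrite sub0r mulrN1 subr_ge0.
  + by rewrite subr0 mulr1 add0r.
  + by rewrite subrr mulr0 addr0.
- under eq_bigr do rewrite seg_coord.
  rewrite big_split /= -mulr_sumr sumrB !sum_delta subrr mulr0 addr0 //.
- exact: Fdown Fvw Hsupp.
Qed.

Lemma seg0 m (v w : 'I_m) : seg v w 0 = delta v.
Proof. by rewrite /seg scale0r addr0. Qed.
Lemma seg1 m (v w : 'I_m) : seg v w 1 = delta w.
Proof. by rewrite /seg scale1r addrC subrK. Qed.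

Lemma seg_continuous m (v w : 'I_m) : continuous (seg v w).
Proof.
move=> t; apply: cvgD; first exact: cvg_cst.
by apply: cvgZr_tmp; exact: cvg_id.
Qed.

Lemma IVT_edge m (F : {set {set 'I_m}}) (f : 'rV[R]_m -> R) v w z :
  fin_complex F -> continuous (from_subspace (realisation F) f) ->
  v != w -> [set v; w] \in F -> f (delta v) <= z <= f (delta w) ->
  exists x, closed_simplex F [set v; w] x /\ f x = z.
Proof.
move=> cF cf vw Fvw hz.
have cg : continuous (from_subspace `[(0:R), 1]%classic (f \o seg v w)).
  apply: (within_comp (B := realisation F)) => //; first exact: seg_continuous.
  move=> t /=; rewrite in_itv /= => /andP[t0 t1].
  by case: (seg_cs cF vw Fvw (t:=t)); rewrite ?t0 ?t1.
have := @IVT _ (f \o seg v w) 0 1 z ler01 cg.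
rewrite /= seg0 seg1.
case: hz => /andP[h1 h2].
have : Num.min (f (delta v)) (f (delta w)) <= z <= Num.max (f (delta v)) (f (delta w)).
  by rewrite ge_min h1 le_max h2 orbT.
move=> H /(_ H) [c]; rewrite in_itv /= => /andP[c0 c1] fc.
exists (seg v w c); split => //; apply: seg_cs => //; by rewrite c0 c1.
Qed.


Lemma sort_perm m (a : 'I_m -> R) :
  exists p : {perm 'I_m}, forall u v, (p u < p v)%nat -> a u <= a v.
Proof.
pose leA := fun u v : 'I_m => a u <= a v.
have tr : transitive leA by move=> x y z; apply: le_trans.
have tot : total leA by move=> x y; apply: le_total.
pose s := sort leA (enum 'I_m).
have ss : sorted leA s by apply: sort_sorted.
have ms : forall u, u \in s by move=> u; rewrite mem_sort mem_enum.
have sz : size s = m by rewrite size_sort size_enum_ord.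
have lt : forall u, (index u s < m)%nat by move=> u; rewrite -[X in (_ < X)%nat]sz index_mem.
pose pf := fun u => Ordinal (lt u).
have inj : injective pf.
  move=> u v /(congr1 val) /= h; exact: (index_inj u (ms u) (ms v) h).
exists (perm inj) => u v; rewrite !permE /=.
move=> h; exact: (sorted_ltn_index tr ss u v (ms u) (ms v) h).
Qed.

Lemma overlap_le m (F : {set {set 'I_m}}) f z : (overlap_at F f z <= #|F|)%nat.
Proof.
rewrite /overlap_at; apply: subset_leq_card; apply/fintype.subsetP => s.
by rewrite inE => /andP[].
Qed.

Lemma sOv_spec m (F : {set {set 'I_m}}) f :
  (exists z, sOv F f = overlap_at F f z) /\
  forall z, (overlap_at F f z <= sOv F f)%nat.
Proof.
have [||H1 H2] := @nat_max_spec (fun k => exists z, k = overlap_at F f z).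
- by exists (overlap_at F f 0), 0.
- by exists #|F| => n [z ->]; exact: overlap_le.
split => // z; apply: H2; by exists z.
Qed.

Lemma sOv_ge m (F : {set {set 'I_m}}) f z : (overlap_at F f z <= sOv F f)%nat.
Proof. exact: (sOv_spec F f).2. Qed.

Lemma sOv_le m (F : {set {set 'I_m}}) f B :
  (forall z, (overlap_at F f z <= B)%nat) -> (sOv F f <= B)%nat.
Proof. by move=> HB; have [[z ->] _] := sOv_spec F f. Qed.

Lemma sOv_le_card m (F : {set {set 'I_m}}) f : (sOv F f <= #|F|)%nat.
Proof. by apply: sOv_le => z; exact: overlap_le. Qed.

Lemma cut_le_overlap m (e : rel 'I_m) (F : {set {set 'I_m}}) (f : 'rV[R]_m -> R)
  (p : {perm 'I_m}) (j : 'I_m) :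
  fin_complex F -> continuous (from_subspace (realisation F) f) ->
  irreflexive e ->
  (forall v w, e v w -> [set v; w] \in F) ->
  (forall u v, (p u < p v)%nat -> f (delta u) <= f (delta v)) ->
  (cut_size e p j <= overlap_at F f (f (delta ((p^-1)%g j))))%nat.
Proof.
move=> cF cf irr eF mono.
set u0 := (p^-1)%g j.
have pu0 : p u0 = j by rewrite /u0 permKV.
set C := [set vw : 'I_m * 'I_m | e vw.1 vw.2 && ((p vw.1 < j)%nat && (j <= p vw.2)%nat)].
rewrite /cut_size -/C.
pose g := fun vw : 'I_m * 'I_m => [set vw.1; vw.2].
have ginj : {in C &, injective g}.
  move=> [v w] [v' w']; rewrite !inE /= /g => /and3P[_ h1 h2] /and3P[_ h1' h2'] E.
  have hv : v \in [set v'; w'] by rewrite -E !inE eqxx.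
  have hw : w \in [set v'; w'] by rewrite -E !inE eqxx orbT.
  rewrite !inE in hv hw.
  case/orP: hv => /eqP hv; case/orP: hw => /eqP hw; rewrite hv hw //;
    rewrite hv in h1; rewrite hw in h2; lia.
rewrite -(card_in_imset ginj); apply: subset_leq_card.
apply/fintype.subsetP => _ /imsetP [[v w] + ->]; rewrite inE /= => /and3P[evw h1 h2].
rewrite inE /g /=; apply/andP; split; first exact: eF.
apply/andP; split.
  by apply/card_gt0P; exists v; rewrite !inE eqxx.
apply/asboolP; apply: IVT_edge => //.
- by apply/negP => /eqP vw; rewrite vw irr in evw.
- exact: eF.
- apply/andP; split; first by apply: mono; rewrite pu0.
  have [->|wu] := eqVneq w u0; first by [].
  apply: mono; rewrite pu0; rewrite leq_eqVlt in h2; case/orP: h2 => // /eqP ej.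
  have ej' : j = p w by apply: val_inj.
  by move: wu; rewrite /u0 ej' permK eqxx.
Qed.


Lemma card_setset n (F : {set {set 'I_n}}) : (#|F| <= expn 2 n)%nat.
Proof.
have h : #|{set 'I_n}| = expn 2 n.
  by have := card_powerset [set: 'I_n]; rewrite powersetT !cardsT card_ord => ->.
by rewrite -h; exact: max_card.
Qed.

Lemma sTO1_spec n (F : {set {set 'I_n}}) :
  (exists f : 'rV[R]_n -> R, continuous (from_subspace (realisation F) f) /\ sTO1 F = sOv F f) /\
  forall f : 'rV[R]_n -> R, continuous (from_subspace (realisation F) f) -> (sTO1 F <= sOv F f)%nat.
Proof.
have [|H1 H2] := @nat_min_spec (fun k => exists f : 'rV[R]_n -> R,
    continuous (from_subspace (realisation F) f) /\ k = sOv F f).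
  exists (sOv F (fun _ => 0)), (fun _ => 0); split => //.
  exact: cst_continuous.
split => // f cf; apply: H2; by exists f.
Qed.

Lemma sTO1_le_card n (F : {set {set 'I_n}}) : (sTO1 F <= expn 2 n)%nat.
Proof.
have [[f [_ ->]] _] := sTO1_spec F.
exact: leq_trans (sOv_le_card F f) (card_setset F).
Qed.

Lemma cutwidth_spec m (e : rel 'I_m) :
  (exists p : {perm 'I_m}, cutwidth e = \max_(j < m) cut_size e p j) /\
  forall p : {perm 'I_m}, (cutwidth e <= \max_(j < m) cut_size e p j)%nat.
Proof.
have [|H1 H2] := @nat_min_spec (fun k => exists p : {perm 'I_m}, k = \max_(j < m) cut_size e p j).
  by exists (\max_(j < m) cut_size e 1%g j), 1%g.
split => // p; apply: H2; by exists p.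
Qed.

Lemma cutwidth_le m (e : rel 'I_m) : (cutwidth e <= m * m)%nat.
Proof.
apply: leq_trans ((cutwidth_spec e).2 1%g) _.
apply/bigmax_leqP => j _; rewrite /cut_size.
by apply: leq_trans (max_card _) _; rewrite card_prod card_ord.
Qed.

Lemma sTO1_X_spec (S : countType) (Xs : {fset S} -> Prop) r :
  forall n (F : {set {set 'I_n}}), (n <= r)%nat -> fin_complex F -> complex_embeds F Xs ->
  (sTO1 F <= sTO1_X Xs r)%nat.
Proof.
move=> n F nr cF eF.
have [||H1 H2] := @nat_max_spec (fun k => exists (n : nat) (F : {set {set 'I_n}}),
    (n <= r)%nat /\ fin_complex F /\ complex_embeds F Xs /\ k = sTO1 F).
- by exists (sTO1 F), n, F.
- exists (expn 2 r) => k [n' [F' [n'r [_ [_ ->]]]]].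
  apply: leq_trans (sTO1_le_card F') _.
  by rewrite leq_pexp2l.
by apply: H2; exists n, F.
Qed.

Lemma sTO1_X_le (S : countType) (Xs : {fset S} -> Prop) r B :
  (forall n (F : {set {set 'I_n}}), (n <= r)%nat -> fin_complex F -> complex_embeds F Xs ->
  (sTO1 F <= B)%nat) -> (sTO1_X Xs r <= B)%nat.
Proof.
move=> HB; rewrite /sTO1_X.
have [||[n [F [nr [cF [eF ->]]]]] _] := @nat_max_spec (fun k => exists (n : nat) (F : {set {set 'I_n}}),
    (n <= r)%nat /\ fin_complex F /\ complex_embeds F Xs /\ k = sTO1 F).
- exists (sTO1 (finset.set0 : {set {set 'I_0}})), 0%nat, finset.set0; split => //; split; last split => //.
  + split => [[m i]|A0 B0]; [by move: (ltn0 m); rewrite i | by rewrite finset.in_set0].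
  + by exists (fun i : 'I_0 => False_rect S (Bool.diff_true_false (etrans (esym (ltn_ord i)) (ltn0 i)))); split;
      [move=> [m i]; exfalso; have := ltn0 m; by rewrite i|move=> s; rewrite finset.in_set0].
- exists (expn 2 r) => k [n' [F' [n'r [_ [_ ->]]]]].
  apply: leq_trans (sTO1_le_card F') _.
  by rewrite leq_pexp2l.
exact: HB.
Qed.

Lemma cw_X_spec (S : countType) (Xs : {fset S} -> Prop) r :
  (exists m (e : rel 'I_m), (m <= r)%nat /\ simple_graph e /\ graph_embeds_skel e Xs /\
     cw_X Xs r = cutwidth e) /\
  forall m (e : rel 'I_m), (m <= r)%nat -> simple_graph e -> graph_embeds_skel e Xs ->
  (cutwidth e <= cw_X Xs r)%nat.
Proof.
have [||H1 H2] := @nat_max_spec (fun k => exists (m : nat) (e : rel 'I_m),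
    (m <= r)%nat /\ simple_graph e /\ graph_embeds_skel e Xs /\ k = cutwidth e).
- exists (cutwidth (fun _ _ : 'I_0 => false)), 0%nat, (fun _ _ => false); split => //; split => //.
  split; last exact.
  by exists (fun i : 'I_0 => False_rect S (Bool.diff_true_false (etrans (esym (ltn_ord i)) (ltn0 i)))); split;
      [move=> [m i]; exfalso; have := ltn0 m; by rewrite i|move=> [m i]; exfalso; have := ltn0 m; by rewrite i].
- exists (r * r)%nat => k [m [e [mr [_ [_ ->]]]]].
  apply: leq_trans (cutwidth_le e) _; exact: leq_mul.
split; first by case: H1 => m [e [? [? [? E]]]]; exists m, e; rewrite /cw_X E.
by move=> m e mr se ee; apply: H2; exists m, e.
Qed.


Definition Fg m (e : rel 'I_m) : {set {set 'I_m}} :=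
  finset (fun s : {set 'I_m} => (#|s| <= 1)%nat || [exists i, exists j, e i j && (s == [set i; j])]).

Lemma Fg_complex m (e : rel 'I_m) : fin_complex (Fg e).
Proof.
split => [i|A B]; first by rewrite inE cards1.
rewrite !inE => /orP[A1|/existsP[i /existsP[j /andP[eij /eqP EA]]]] BA.
  by rewrite (leq_trans (subset_leq_card BA) A1).
case: (leqP #|B| 1) => //= B2.
apply/existsP; exists i; apply/existsP; exists j; rewrite eij /=.
rewrite -EA eqEcard BA /=; apply: leq_trans B2; rewrite EA cards2; by case: (i != j).
Qed.

Lemma Fg_edge m (e : rel 'I_m) v w : e v w -> [set v; w] \in Fg e.
Proof.
move=> evw; rewrite inE; apply/orP; right; apply/existsP; exists v; apply/existsP; exists w.
by rewrite evw eqxx.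
Qed.

Lemma Xs_sub (S : countType) (Xs : {fset S} -> Prop) m (psi : 'I_m -> S)
    (sigma : {set 'I_m}) (T : {fset S}) :
  is_complex Xs -> Xs T -> (forall k, k \in sigma -> psi k \in T) ->
  Xs [fset psi i | i in enum sigma]%fset.
Proof.
move=> [_ down] XT H; apply: down XT _.
apply/fsubsetP => x /imfsetP [k /= kin ->]; apply: H; by rewrite mem_enum in kin.
Qed.

Lemma Fg_embeds (S : countType) (Xs : {fset S} -> Prop) m (e : rel 'I_m) :
  is_complex Xs -> (0 < m)%nat -> graph_embeds_skel e Xs -> complex_embeds (Fg e) Xs.
Proof.
move=> cX m0 [psi [ipsi epsi]]; exists psi; split => // sigma.
rewrite inE => /orP[s1|/existsP[i /existsP[j /andP[eij /eqP ->]]]]; last first.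
  apply: Xs_sub (epsi _ _ eij) _ => // k; rewrite !inE => /orP[]/eqP->;
    by rewrite eqxx ?orbT.
case: (set_0Vmem sigma) => [->|[i isig]].
  apply: (Xs_sub (T := [fset psi (Ordinal m0)]%fset)) => //; first exact: cX.1.
  by move=> k; rewrite finset.in_set0.
apply: (Xs_sub (T := [fset psi i]%fset)) => //; first exact: cX.1.
move=> k ksig; rewrite in_fset1.
by have -> := card_le1_eqP s1 k i ksig isig.
Qed.

Lemma lowerA m (e : rel 'I_m) (f : 'rV[R]_m -> R) :
  simple_graph e -> continuous (from_subspace (realisation (Fg e)) f) ->
  (cutwidth e <= sOv (Fg e) f)%nat.
Proof.
move=> [sym irr] cf.
have [p mono] := sort_perm (fun i => f (delta i)).
apply: leq_trans ((cutwidth_spec e).2 p) _.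
apply/bigmax_leqP => j _.
apply: leq_trans (sOv_ge _ _ (f (delta ((p^-1)%g j)))).
apply: cut_le_overlap => //.
- exact: Fg_complex.
- exact: Fg_edge.
Qed.

Lemma partA (S : countType) (Xs : {fset S} -> Prop) r :
  is_complex Xs -> (cw_X Xs r <= sTO1_X Xs r)%nat.
Proof.
move=> cX.
have [[m [e [mr [se [ee ->]]]]] _] := cw_X_spec Xs r.
case: (posnP m) => [m0|m0].
  subst m; apply: leq_trans ((cutwidth_spec e).2 1%g) _.
  by rewrite big_ord0.
apply: leq_trans (sTO1_X_spec mr (Fg_complex e) (Fg_embeds cX m0 ee)).
have [[f [cf ->]] _] := sTO1_spec (Fg e).
exact: lowerA.
Qed.


Lemma card_bigcup_le (T I : finType) (P : {set I}) (G : I -> {set T}) :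
  (#|\bigcup_(i in P) G i| <= \sum_(i in P) #|G i|)%nat.
Proof.
apply: (big_rec2 (fun (U : {set T}) k => is_true (#|U| <= k)%nat)); first by rewrite cards0.
move=> i U k _ Hk; apply: leq_trans (leq_card_setU _ _).1 _.
by rewrite leq_add2l.
Qed.

Lemma convex_ex m (x : 'rV[R]_m) (sigma : {set 'I_m}) (g : 'I_m -> R) :
  (forall i, 0 <= x ord0 i) -> \sum_(i < m) x ord0 i = 1 -> supp x \subset sigma ->
  exists2 v, v \in sigma & g v <= \sum_(i < m) x ord0 i * g i.
Proof.
move=> x0 x1 xs.
set s := \sum_(i < m) x ord0 i * g i.
case: (pselect (exists2 v, v \in sigma & g v <= s)) => // nH.
have Hg : forall i, i \in sigma -> s < g i.
  move=> i isig; rewrite ltNge; apply/negP => hi; apply: nH; by exists i.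
have [i0 xi0] : exists i, x ord0 i != 0.
  case: (pselect (exists i, x ord0 i != 0)) => // nx.
  suff : \sum_(i < m) x ord0 i = 0 by rewrite x1 => /eqP; rewrite oner_eq0.
  apply: big1 => i _; apply/eqP; apply/negPn/negP => hi; apply: nx; by exists i.
have i0s : i0 \in sigma by apply: (fintype.subsetP xs); rewrite inE.
have E : \sum_(i < m) x ord0 i * (g i - s) = 0.
  under eq_bigr do rewrite mulrBr.
  by rewrite sumrB -mulr_suml x1 mul1r subrr.
suff : 0 < \sum_(i < m) x ord0 i * (g i - s) by rewrite E ltxx.
rewrite (bigD1 i0) //=; apply: ltr_wpDr.
  apply: sumr_ge0 => i _.
  case: (boolP (i \in sigma)) => [isg|ins].
    by apply: mulr_ge0 => //; rewrite subr_ge0 ltW // Hg.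
  have -> : x ord0 i = 0.
    by apply/eqP; apply/negPn/negP => hi; move: ins; rewrite (fintype.subsetP xs) // inE.
  by rewrite mul0r.
apply: mulr_gt0; first by rewrite lt_def xi0 x0.
by rewrite subr_gt0 Hg.
Qed.


Definition Nb n (F : {set {set 'I_n}}) (u : 'I_n) : {set 'I_n} :=
  finset (fun t => (t == u) || ([set u; t] \in F)).
Definition star n (F : {set {set 'I_n}}) (u : 'I_n) : {set {set 'I_n}} :=
  finset (fun s : {set 'I_n} => (s \in F) && (u \in s)).
Definition eFg n (F : {set {set 'I_n}}) : rel 'I_n :=
  fun i j => (i != j) && ([set i; j] \in F).

Lemma Xs_pair (S : countType) (Xs : {fset S} -> Prop) n (F : {set {set 'I_n}}) phi u t :
  is_complex Xs -> (forall sigma, sigma \in F -> Xs [fset phi i | i in enum sigma]%fset) ->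
  [set u; t] \in F -> Xs [fset phi u; phi t]%fset.
Proof.
move=> [_ down] eph ut; apply: down (eph _ ut) _.
apply/fsubsetP => x; rewrite in_fset2 => /orP[]/eqP->; apply/imfsetP;
  [exists u|exists t] => //=; by rewrite mem_enum !inE eqxx ?orbT.
Qed.

Lemma Nb_card (S : countType) (Xs : {fset S} -> Prop) D n (F : {set {set 'I_n}}) phi u :
  is_complex Xs ->
  (forall (s : S) (A : {fset S}),
    (forall t, t \in A -> t != s /\ Xs [fset s; t]%fset) -> (#|` A| <= D)%nat) ->
  injective phi -> (forall sigma, sigma \in F -> Xs [fset phi i | i in enum sigma]%fset) ->
  (#|Nb F u| <= D.+1)%nat.
Proof.
move=> cX HD iphi eph.
rewrite (cardsD1 u) -add1n; apply: leq_add; first exact: leq_b1.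
have -> : #|Nb F u :\ u| = #|` [fset phi t | t in enum (Nb F u :\ u)]%fset|.
  by rewrite card_imfset //= undup_id ?enum_uniq // cardE.
apply: (HD (phi u)) => x /imfsetP [t /= + ->]; rewrite mem_enum !inE => /andP[tu].
rewrite (negbTE tu) /= => Fut; split; first by rewrite (inj_eq iphi).
exact: (Xs_pair cX eph Fut).
Qed.

Lemma star_card n (F : {set {set 'I_n}}) u D :
  fin_complex F -> (#|Nb F u| <= D.+1)%nat -> (#|star F u| <= expn 2 D.+1)%nat.
Proof.
move=> [_ down] hN.
apply: leq_trans (_ : #|powerset (Nb F u)| <= _)%nat.
  apply: subset_leq_card; apply/fintype.subsetP => s; rewrite !inE => /andP[sF us].
  apply/fintype.subsetP => t ts; rewrite inE; case: eqP => //= _.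
  apply: down sF _; apply/fintype.subsetP => k; rewrite !inE => /orP[]/eqP->//.
by rewrite card_powerset leq_pexp2l.
Qed.

Lemma eFg_simple n (F : {set {set 'I_n}}) : simple_graph (eFg F).
Proof.
split; first by move=> i j; rewrite /eFg eq_sym finset.setUC.
by move=> i; rewrite /eFg eqxx.
Qed.

Lemma eFg_embeds (S : countType) (Xs : {fset S} -> Prop) n (F : {set {set 'I_n}}) :
  is_complex Xs -> complex_embeds F Xs -> graph_embeds_skel (eFg F) Xs.
Proof.
move=> cX [phi [iphi eph]]; exists phi; split => // i j /andP[_ h].
exact: (Xs_pair cX eph h).
Qed.

Definition fpos n (p : {perm 'I_n}) (x : 'rV[R]_n) : R :=
  \sum_(i < n) x ord0 i * (p i)%:R.

Lemma fpos_continuous n (p : {perm 'I_n}) : continuous (fpos p).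
Proof.
rewrite /fpos; apply: continuous_big; first exact: (@pseudometric_normed_Zmodule.add_continuous _ R^o).
move=> i _ x; apply: (@cvgMr_tmp _ _ (nbhs x)); exact: (@coord_continuous _ 1 n ord0 i x).
Qed.

Lemma overlap_bound n (F : {set {set 'I_n}}) (p : {perm 'I_n}) K z :
  fin_complex F -> (forall u, (#|star F u| <= K)%nat) ->
  (overlap_at F (fpos p) z <= K * (\max_(j < n) cut_size (eFg F) p j).+1)%nat.
Proof.
move=> cF hK.
set cw := \max_(j < n) cut_size (eFg F) p j.
set U := finset (fun u : 'I_n => (p u)%:R == z).
set j := (Num.truncn z).+1.
set C := finset (fun vw : 'I_n * 'I_n =>
  eFg F vw.1 vw.2 && ((p vw.1 < j)%nat && (j <= p vw.2)%nat)).
have hU : (#|U| <= 1)%nat.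
  apply/card_le1_eqP => u u'; rewrite !inE => /eqP hu /eqP hu'.
  have : ((p u)%:R == (p u')%:R :> R) by rewrite hu hu'.
  by rewrite eqr_nat => /eqP/val_inj/perm_inj.
have hC : (#|C| <= cw)%nat.
  case: (ltnP j n) => jn.
    apply: leq_trans (leq_bigmax (Ordinal jn)); by [].
  suff -> : C = finset.set0 by rewrite cards0.
  apply/setP => vw; rewrite !inE; apply/negbTE; apply/negP => /and3P[_ _ h].
  by have := leq_trans jn h; rewrite leqNgt ltn_ord.
apply: leq_trans (_ : #|\bigcup_(u in U) star F u :|: \bigcup_(vw in C) star F vw.1| <= _)%nat.
  apply: subset_leq_card; apply/fintype.subsetP => sigma.
  rewrite inE => /andP[sF /andP[_ /asboolP [x [[[x0 [x1 _]] xs] fx]]]].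
  have [v vs hv] := convex_ex (fun i => (p i)%:R) x0 x1 xs.
  have [w ws hw] := convex_ex (fun i => - (p i)%:R) x0 x1 xs.
  rewrite /= in hv hw.
  rewrite (eq_bigr (fun i => - (x ord0 i * (p i)%:R))) in hw; last by move=> i _; rewrite mulrN.
  rewrite sumrN lerN2 -/(fpos p x) fx in hw.
  rewrite -/(fpos p x) fx in hv.
  have starv : sigma \in star F v by rewrite inE sF vs.
  have starw : sigma \in star F w by rewrite inE sF ws.
  case: (eqVneq ((p v)%:R) z) => [ev|nv].
    by apply/setUP; left; apply/bigcupP; exists v => //; rewrite inE ev.
  case: (eqVneq ((p w)%:R) z) => [ew|nw].
    by apply/setUP; left; apply/bigcupP; exists w => //; rewrite inE ew.
  have lv : (p v)%:R < z by rewrite lt_neqAle nv hv.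
  have lw : z < (p w)%:R by rewrite lt_neqAle eq_sym nw hw.
  have z0 : 0 <= z by apply: le_trans hv.
  apply/setUP; right; apply/bigcupP; exists (v, w) => //.
  rewrite inE /eFg /=; apply/andP; split.
    apply/andP; split.
      by apply/negP => /eqP vw; move: (lt_trans lv lw); rewrite vw ltxx.
    apply: cF.2 sF _; apply/fintype.subsetP => k; rewrite !inE => /orP[]/eqP->//.
  apply/andP; split.
    by rewrite /j ltnS truncn_ge_nat // ltW.
  by rewrite /j truncn_lt_nat.
apply: leq_trans (leq_card_setU _ _).1 _.
rewrite mulnS; apply: leq_add.
  apply: leq_trans (card_bigcup_le _ _) _.
  apply: leq_trans (_ : \sum_(u in U) K <= _)%nat; first by apply: leq_sum => u _.
  by rewrite sum_nat_const; apply: leq_trans (leq_mul hU (leqnn K)) _; rewrite mul1n.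
apply: leq_trans (card_bigcup_le _ _) _.
apply: leq_trans (_ : \sum_(vw in C) K <= _)%nat; first by apply: leq_sum => u _.
by rewrite sum_nat_const mulnC; apply: leq_mul.
Qed.


Lemma partB (S : countType) (Xs : {fset S} -> Prop) :
  is_complex Xs -> bounded_degree Xs ->
  exists K, (0 < K)%nat /\ forall r, (sTO1_X Xs r <= K * (cw_X Xs r).+1)%nat.
Proof.
move=> cX [D HD]; exists (expn 2 D.+1); split; first by rewrite expn_gt0.
move=> r; apply: sTO1_X_le => n F nr cF eF.
have eF' := eF; case: eF' => phi [iphi eph].
have [[p Hp] _] := cutwidth_spec (eFg F).
have cf : continuous (from_subspace (realisation F) (fpos p)).
  apply: continuous_subspaceT; exact: fpos_continuous.
apply: leq_trans ((sTO1_spec F).2 (fpos p) cf) _.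
apply: sOv_le => z.
apply: leq_trans (overlap_bound p z cF (fun u => star_card cF (Nb_card u cX HD iphi eph))) _.
rewrite -Hp leq_mul2l ltnS; apply/orP; right.
exact: (cw_X_spec Xs r).2 _ _ nr (eFg_simple F) (eFg_embeds cX eF).
Qed.

Lemma cw_X_mono (S : countType) (Xs : {fset S} -> Prop) r r' :
  (r <= r')%nat -> (cw_X Xs r <= cw_X Xs r')%nat.
Proof.
move=> rr; have [[m [e [mr [se [ee ->]]]]] _] := cw_X_spec Xs r.
exact: (cw_X_spec Xs r').2 _ _ (leq_trans mr rr) se ee.
Qed.

Theorem theorem1p4 (S : countType) (Xs : {fset S} -> Prop) :
  is_complex Xs -> bounded_degree Xs ->
  asymp_eq (sTO1_X Xs) (cw_X Xs).
Proof.
move=> cX bX; split.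
- have [K [K0 HK]] := partB cX bX; exists K => r.
  apply: leq_trans (HK r) _; rewrite mulnS addnC leq_add2r leq_mul2l.
  apply/orP; right; apply: cw_X_mono; by rewrite leq_pmull.
- exists 1%nat => r; rewrite !mul1n; apply: leq_trans (partA r cX) _; exact: leq_addr.
Qed.
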